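(* Let $(G,k)$ be an instance and let $v\in V$ satisfy $|N(v)|>7k$ and $\rho(v)> \frac{|N(v)|(|N(v)|-1)}{4}$. Then for every feasible solution $X$ with $v\notin X$, the connected component of $G-X$ containing $v$ is a clique.
   Context: Graphs are undirected, without self-loops, possibly with multi-edges. $N(v)$ is the set of vertices adjacent to $v$; $\rho(v)$ is the number of unordered pairs $\{u_1,u_2\}\subseteq N(v)$ joined by at least one edge (parallel edges counted once). A vertex set induces a clique if between any two distinct vertices of it there is exactly one edge, and a tree if it is connected and has no cycle (two parallel edges form a cycle). For an integer $k\ge1$, a feasible solution is a set $X\subseteq V$ with $|X|\le k$ such that every connected component of $G-X$ is a clique or a tree. *)

(* Defs.v *)
From mathcomp Require Import all_boot.
Set Implicit Arguments. Unset Strict Implicit. Unset Printing Implicit Defensive.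

(* An undirected multigraph without self-loops on a finite vertex type T:
   mult x y = number of edges between x and y. *)
Record mgraph (T : finType) := MGraph {
  mult : T -> T -> nat;
  mult_sym : forall x y, mult x y = mult y x;
  mult_irr : forall x, mult x x = 0
}.

Section Defs.
Variables (T : finType) (G : mgraph T).

Definition adj : rel T := fun x y => 0 < mult G x y.

Definition nbh (v : T) : {set T} := [set u | adj v u].

(* rho(v): number of unordered pairs {u1,u2} of (distinct) neighbours of v
   joined by at least one edge (parallel edges counted once). *)
Definition rho (v : T) : nat :=
  #|[set S : {set T} | [exists u1, exists u2,
       [&& S == [set u1; u2], u1 != u2, u1 \in nbh v, u2 \in nbh v & adj u1 u2]]]|.

Definition induces_clique (S : {set T}) : Prop :=
  forall u w, u \in S -> w \in S -> u != w -> mult G u w = 1.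

Definition adj_in (S : {set T}) : rel T :=
  fun x y => [&& x \in S, y \in S & adj x y].

(* A cycle in the induced subgraph G[S]: either two parallel edges (a cycle
   of length 2), or a closed path through >= 3 distinct vertices of S
   (self-loops do not exist). *)
Definition has_cycle_in (S : {set T}) : Prop :=
  (exists u w, [/\ u \in S, w \in S, u != w & 1 < mult G u w]) \/
  (exists s : seq T, [/\ 3 <= size s, uniq s, all (mem S) s & cycle (adj_in S) s]).

Definition induces_tree (S : {set T}) : Prop :=
  (forall u w, u \in S -> w \in S -> connect (adj_in S) u w) /\ ~ has_cycle_in S.

Definition comp_minus (X : {set T}) (v : T) : {set T} :=
  [set u | connect (adj_in (~: X)) v u].

Definition feasible (k : nat) (X : {set T}) : Prop :=
  #|X| <= k /\
  forall u, u \notin X -> induces_clique (comp_minus X u) \/ induces_tree (comp_minus X u).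

End Defs.

(* Main.v *)
Require Import Defs.
From mathcomp Require Import all_boot.
From mathcomp Require Import zify.
Set Implicit Arguments. Unset Strict Implicit. Unset Printing Implicit Defensive.

Theorem mainTheorem4 (T : finType) (G : mgraph T) (k : nat) (v : T) :
  1 <= k ->
  7 * k < #|nbh G v| ->
  #|nbh G v| * (#|nbh G v| - 1) < 4 * rho G v ->
  forall X : {set T}, feasible G k X -> v \notin X ->
  induces_clique G (comp_minus G X v).
Proof.
move=> k1 hd hr X [hX hf] vX.
case: (hf v vX) => // [[_ hnc]].
exfalso.
pose f := fun p : T * T => [set p.1; p.2].
have sub : [set S : {set T} | [exists u1, exists u2,
       [&& S == [set u1; u2], u1 != u2, u1 \in nbh G v, u2 \in nbh G v & adj G u1 u2]]]
    \subset f @: setX X (nbh G v).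
  apply/subsetP => S; rewrite inE => /existsP [u1 /existsP [u2 /and5P [/eqP -> ne n1 n2 a12]]].
  case: (boolP (u1 \in X)) => x1.
    by apply/imsetP; exists (u1, u2) => //; rewrite inE /= x1 n2.
  case: (boolP (u2 \in X)) => x2.
    apply/imsetP; exists (u2, u1); first by rewrite inE /= x2 n1.
    by rewrite /f /= setUC.
  exfalso; apply: hnc; right.
  have av1 : adj G v u1 by move: n1; rewrite inE.
  have av2 : adj G v u2 by move: n2; rewrite inE.
  have inC : forall u, u \notin X -> adj G v u -> u \in comp_minus G X v.
    move=> u uX au; rewrite inE; apply: connect1.
    by rewrite /adj_in !inE vX uX au.
  have vC : v \in comp_minus G X v by rewrite inE connect0.
  have c1 := inC _ x1 av1; have c2 := inC _ x2 av2.
  have nv : forall u, adj G v u -> v != u.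
    move=> u; apply: contraL => /eqP <-; by rewrite /adj mult_irr.
  exists [:: v; u1; u2]; split => //.
  - rewrite /= !inE negb_or (nv _ av1) (nv _ av2) ne //.
  - by rewrite /= vC c1 c2.
  - rewrite /= /adj_in vC c1 c2 av1 a12 /=.
    by rewrite andbT /adj mult_sym.
have := subset_leq_card sub.
move=> h0; have h1 : rho G v <= #|f @: setX X (nbh G v)| := h0; clear h0.
have h2 := leq_imset_card f (setX X (nbh G v)).
rewrite cardsX in h2.
have h3 : #|X| * #|nbh G v| <= k * #|nbh G v| by rewrite leq_mul2r hX orbT.
set d := #|nbh G v| in hd hr h2 h3.
have h4 : 4 * k * d <= d * (d - 1).
  rewrite mulnC leq_mul2l; apply/orP; right; lia.
lia.
Qed.
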